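(* Let $T$ be a minimal homeomorphism of a compact metric space $X$, let $G$ be a locally compact second countable group, let $f:X\to G$ be continuous, and let $\{H_x\}_{x\in X}$ be a consistent selection of subgroups for $f$. Let $U\subseteq G$ be a relatively compact open set. Then the set $$M_U=\{x\in X: E_x\cap\big(\overline U H_x\setminus UH_x\big)=\varnothing\}$$ is open in $X$.
   Context: The cocycle generated by $f$ is $f(n,x)=f(T^{n-1}x)\cdots f(x)$ for $n\ge1$, $f(0,x)=e$, $f(n,x)=f(-n,T^nx)^{-1}$ for $n<0$; $T_f(x,g)=(Tx,f(x)g)$ on $X\times G$. The (local) essential range at $x\in X$ is $E_x=E_x(f)$, the set of all $g\in G$ such that for every open neighbourhood $\mathcal U$ of $x$ in $X$ and every open neighbourhood $V$ of $e$ in $G$ there is $n\in\mathbb Z$ and $y\in\mathcal U\cap T^{-n}\mathcal U$ with $f(n,y)\in Vg$. Let $\mathcal C(G)$ be the space of closed subgroups of $G$ with the Fell topology (the topology on closed subsets with basis sets $\{S: S\cap K=\varnothing, S\cap O_i\neq\varnothing, i=1,\dots,k\}$, $K$ compact, $O_i$ open). A consistent selection of subgroups is a continuous map $x\mapsto H_x$ from $X$ to $\mathcal C(G)$ such that $H_x\subseteq E_x$ for every $x$ and $H_{T^nx}=f(n,x)H_xf(n,x)^{-1}$ for all $x\in X$, $n\in\mathbb Z$. *)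

(* Defs.v *)
From HB Require Import structures.
From mathcomp Require Import all_boot all_order all_algebra.
From mathcomp Require Import all_classical all_reals topology.

Set Implicit Arguments.
Unset Strict Implicit.
Unset Printing Implicit Defensive.

Import Order.TTheory GRing.Theory Num.Theory.
Local Open Scope classical_set_scope.

HB.mixin Record Group_Topological_isTopGroup G of Group G & Topological G := {
  topgroup_mul_continuous : continuous (fun p : G * G => (p.1 * p.2)%g);
  topgroup_inv_continuous : continuous (fun x : G => (x^-1)%g)
}.

#[short(type="topGroupType")]
HB.structure Definition TopGroup :=
  {G of Group_Topological_isTopGroup G & Group G & Topological G}.

Section Defs.

Local Open Scope group_scope.

Definition setmulg (G : groupType) (A B : set G) : set G :=
  [set z | exists a b, A a /\ B b /\ z = a * b].

Definition closed_subgroup (G : topGroupType) (S : set G) : Prop :=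
  [/\ closed S, S 1, (forall a b, S a -> S b -> S (a * b))
    & (forall a, S a -> S a^-1)].

(* T^n for n in Z, given T and its inverse Ti *)
Definition iterz (X : Type) (T Ti : X -> X) (n : int) (x : X) : X :=
  match n with
  | Posz k => iter k T x
  | Negz k => iter k.+1 Ti x
  end.

Definition homeomorphism (X : topologicalType) (T Ti : X -> X) : Prop :=
  [/\ cancel T Ti, cancel Ti T, continuous T & continuous Ti].

Definition minimal_homeo (X : topologicalType) (T Ti : X -> X) : Prop :=
  homeomorphism T Ti /\
  forall A : set X, closed A -> T @` A = A -> A = set0 \/ A = setT.

(* the cocycle f(n,x) for n >= 0:  f(T^{n-1}x) ... f(x),  f(0,x) = e *)
Fixpoint cocycle_nat (X : Type) (G : groupType) (T : X -> X) (f : X -> G)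
  (n : nat) (x : X) : G :=
  match n with
  | 0 => 1
  | k.+1 => f (iter k T x) * cocycle_nat T f k x
  end.

(* f(n,x) for n in Z;  f(n,x) = f(-n, T^n x)^{-1} for n < 0 *)
Definition cocycle (X : Type) (G : groupType) (T Ti : X -> X) (f : X -> G)
  (n : int) (x : X) : G :=
  match n with
  | Posz k => cocycle_nat T f k x
  | Negz k => (cocycle_nat T f k.+1 (iterz T Ti (Negz k) x))^-1
  end.

Definition ess_range (X : topologicalType) (G : topGroupType) (T Ti : X -> X)
  (f : X -> G) (x : X) : set G :=
  [set g | forall (U : set X) (V : set G), open U -> U x -> open V -> V 1 ->
     exists (n : int) (y : X), U y /\ U (iterz T Ti n y) /\
       setmulg V [set g] (cocycle T Ti f n y)].

(* continuity of x |-> H x into the space C(G) of closed subgroups with the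
   Fell topology: the preimage of each basic open set
   {S : S :&: K = set0, S :&: O_i <> set0 (i < k)}, K compact, O_i open,
   is open in X. *)
Definition fell_continuous (X : topologicalType) (G : topGroupType)
  (H : X -> set G) : Prop :=
  forall (K : set G) (k : nat) (O : 'I_k -> set G),
    compact K -> (forall i, open (O i)) ->
    open [set x | H x `&` K = set0 /\ forall i, H x `&` O i !=set0].

Definition consistent_selection (X : topologicalType) (G : topGroupType)
  (T Ti : X -> X) (f : X -> G) (H : X -> set G) : Prop :=
  [/\ (forall x, closed_subgroup (H x)),
      fell_continuous H,
      (forall x, H x `<=` ess_range T Ti f x)
    & (forall x (n : int),
        H (iterz T Ti n x) =
        setmulg (setmulg [set cocycle T Ti f n x] (H x))
                [set (cocycle T Ti f n x)^-1])].

End Defs.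

(* Main.v *)
Require Import Defs.
From HB Require Import structures.
From mathcomp Require Import all_boot all_order all_algebra.
From mathcomp Require Import all_classical all_reals topology.

Local Open Scope classical_set_scope.

Set Implicit Arguments.
Unset Strict Implicit.

Local Open Scope group_scope.

Lemma cont_mul (X : topologicalType) (G : topGroupType) (a b : X -> G) :
  continuous a -> continuous b -> continuous (fun y => a y * b y).
Proof.
move=> ca cb y.
apply: (@continuous_comp _ _ _ (fun y => (a y, b y)) (fun p : G * G => p.1 * p.2)).
  by apply: cvg_pair; [exact: ca | exact: cb].
exact: topgroup_mul_continuous.
Qed.

Lemma cont_inv (X : topologicalType) (G : topGroupType) (a : X -> G) :
  continuous a -> continuous (fun y => (a y)^-1).
Proof.
move=> ca y.
apply: (@continuous_comp _ _ _ a (fun p : G => p^-1)); first exact: ca.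
exact: topgroup_inv_continuous.
Qed.

Lemma cont_cst (X Y : topologicalType) (c : Y) : continuous (fun _ : X => c).
Proof. move=> y; exact: cvg_cst. Qed.

Lemma cont_id (X : topologicalType) : continuous (fun x : X => x).
Proof. by move=> y. Qed.

Lemma cont_fst (X Y : topologicalType) : continuous (fun p : X * Y => p.1).
Proof. move=> p; exact: cvg_fst. Qed.

Lemma cont_snd (X Y : topologicalType) : continuous (fun p : X * Y => p.2).
Proof. move=> p; exact: cvg_snd. Qed.

Lemma nbhs_open (X : topologicalType) (p : X) (A : set X) :
  nbhs p A -> exists B, [/\ open B, B p & B `<=` A].
Proof. rewrite nbhsE => -[B [oB Bp] BA]; by exists B. Qed.

Lemma nbhs_prod_open (X Y : topologicalType) (a : X) (b : Y) (P : set (X * Y)) :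
  nbhs (a, b) P -> exists A B, [/\ open A, A a, open B, B b &
     forall x y, A x -> B y -> P (x, y)].
Proof.
move=> [[A0 B0] /= [nA nB] sub].
have [A [oA Aa AA]] := nbhs_open nA.
have [B [oB Bb BB]] := nbhs_open nB.
exists A, B; split => // x y Ax By; apply: sub; split; [exact: AA|exact: BB].
Qed.
From mathcomp Require Import zify.

Lemma int_ind2 (P : int -> Prop) : P 0%R ->
  (forall n, P n -> P (n + 1)%R) -> (forall n, P n -> P (n - 1)%R) ->
  forall n, P n.
Proof.
move=> P0 Hp Hm; case=> k.
  elim: k => // k IH; have := Hp _ IH.
  by have -> : (Posz k + 1)%R = Posz k.+1 by lia.
elim: k => [|k IH]; first by have := Hm _ P0.
have := Hm _ IH; by have -> : (Negz k - 1)%R = Negz k.+1 by lia.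
Qed.

Lemma iterz_step (X : Type) (T Ti : X -> X) : cancel Ti T ->
  forall n x, iterz T Ti (n + 1)%R x = T (iterz T Ti n x).
Proof.
move=> TiK; case=> k x.
  by have -> : (Posz k + 1)%R = Posz k.+1 by lia.
case: k => [|k].
  by have -> : (Negz 0 + 1)%R = 0%R by lia; rewrite /= TiK.
have -> : (Negz k.+1 + 1)%R = Negz k by lia.
by rewrite /= TiK.
Qed.

Lemma iterz_stepm (X : Type) (T Ti : X -> X) : cancel T Ti -> cancel Ti T ->
  forall n x, iterz T Ti (n - 1)%R x = Ti (iterz T Ti n x).
Proof.
move=> TK TiK n x.
have := iterz_step TiK (n - 1)%R x; rewrite GRing.subrK => ->.
by rewrite TK.
Qed.

Lemma iterz_add (X : Type) (T Ti : X -> X) : cancel T Ti -> cancel Ti T ->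
  forall n m x, iterz T Ti (n + m)%R x = iterz T Ti n (iterz T Ti m x).
Proof.
move=> TK TiK n m x; elim/int_ind2: n.
- by rewrite GRing.add0r.
- move=> n IH; rewrite GRing.addrAC !iterz_step //; by rewrite IH.
- move=> n IH; rewrite GRing.addrAC !iterz_stepm //; by rewrite IH.
Qed.

Lemma cn_shift (X : Type) (G : groupType) (T : X -> X) (f : X -> G) k y :
  cocycle_nat T f k.+1 y = cocycle_nat T f k (T y) * f y.
Proof.
elim: k y => [|k IH] y; first by rewrite /= mulg1 mul1g.
change (f (iter k.+1 T y) * cocycle_nat T f k.+1 y =
  f (iter k T (T y)) * cocycle_nat T f k (T y) * f y).
by rewrite IH mulgA iterSr.
Qed.

Lemma cocycle_step (X : Type) (G : groupType) (T Ti : X -> X) (f : X -> G) :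
  cancel Ti T -> forall n x,
  cocycle T Ti f (n + 1)%R x = f (iterz T Ti n x) * cocycle T Ti f n x.
Proof.
move=> TiK; case=> k x.
  by have -> : (Posz k + 1)%R = Posz k.+1 by lia.
case: k => [|k].
  have -> : (Negz 0 + 1)%R = 0%R by lia.
  by rewrite /= mulg1 mulgV.
have -> : (Negz k.+1 + 1)%R = Negz k by lia.
change ((cocycle_nat T f k.+1 (iter k.+1 Ti x))^-1 =
  f (iter k.+2 Ti x) * (cocycle_nat T f k.+2 (iter k.+2 Ti x))^-1).
rewrite [cocycle_nat T f k.+2 _]cn_shift.
have -> : T (iter k.+2 Ti x) = iter k.+1 Ti x by rewrite [iter k.+2 _ _]/= TiK.
by rewrite [in RHS]invgM [in RHS]mulgA mulgV mul1g.
Qed.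

Lemma cocycle_stepm (X : Type) (G : groupType) (T Ti : X -> X) (f : X -> G) :
  cancel Ti T -> forall n x,
  cocycle T Ti f (n - 1)%R x = (f (iterz T Ti (n - 1)%R x))^-1 * cocycle T Ti f n x.
Proof.
move=> TiK n x.
have := cocycle_step f TiK (n - 1)%R x; rewrite GRing.subrK => ->.
by rewrite mulgA mulVg mul1g.
Qed.

Lemma cocycle_add (X : Type) (G : groupType) (T Ti : X -> X) (f : X -> G) :
  cancel T Ti -> cancel Ti T -> forall n m x,
  cocycle T Ti f (n + m)%R x =
  cocycle T Ti f n (iterz T Ti m x) * cocycle T Ti f m x.
Proof.
move=> TK TiK n m x; elim/int_ind2: n.
- by rewrite GRing.add0r /= mul1g.
- move=> n IH; rewrite GRing.addrAC !cocycle_step // IH mulgA.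
  by rewrite iterz_add.
- move=> n IH; rewrite GRing.addrAC !cocycle_stepm // IH mulgA.
  by rewrite -iterz_add // GRing.addrAC.
Qed.

Lemma iter_cont (X : topologicalType) (T : X -> X) k :
  continuous T -> continuous (iter k T).
Proof.
move=> cT; elim: k => [|k IH] y; first by [].
exact: (continuous_comp (IH y) (cT (iter k T y))).
Qed.

Lemma iterz_cont (X : topologicalType) (T Ti : X -> X) n :
  continuous T -> continuous Ti -> continuous (iterz T Ti n).
Proof. by move=> cT cTi; case: n => k /=; apply: iter_cont. Qed.

Lemma cn_cont (X : topologicalType) (G : topGroupType) (T : X -> X) (f : X -> G) k :
  continuous T -> continuous f -> continuous (cocycle_nat T f k).
Proof.
move=> cT cf; elim: k => [|k IH] /=; first exact: cont_cst.
apply: cont_mul => //.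
move=> y; exact: (continuous_comp (@iter_cont _ T k cT y) (cf (iter k T y))).
Qed.

Lemma cocycle_cont (X : topologicalType) (G : topGroupType) (T Ti : X -> X)
  (f : X -> G) n :
  continuous T -> continuous Ti -> continuous f -> continuous (cocycle T Ti f n).
Proof.
move=> cT cTi cf; case: n => k /=; first exact: cn_cont.
apply: cont_inv => y.
exact: (continuous_comp (@iter_cont _ Ti k.+1 cTi y) (@cn_cont _ _ T f k.+1 cT cf _)).
Qed.

Lemma essP (X : topologicalType) (G : topGroupType) (T Ti : X -> X) (f : X -> G)
  x g :
  ess_range T Ti f x g <-> forall (U : set X) (A : set G), open U -> U x ->
    open A -> A g ->
    exists n y, U y /\ U (iterz T Ti n y) /\ A (cocycle T Ti f n y).
Proof.
split.
- move=> E U A oU Ux oA Ag.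
  have oV : open ((fun v => v * g) @^-1` A).
    apply: (proj1 (continuousP (fun v : G => v * g))) oA.
    have h := @cont_mul G G (fun v => v) (fun _ => g) (@cont_id G) (@cont_cst G G g).
    exact: h.
  have V1 : ((fun v => v * g) @^-1` A) 1 by rewrite /= mul1g.
  have [n [y [Uy [Uny [a [b [Va [bg ce]]]]]]]] := E U _ oU Ux oV V1.
  by exists n, y; rewrite ce bg.
- move=> E U V oU Ux oV V1.
  have oA : open ((fun c => c * g^-1) @^-1` V).
    apply: (proj1 (continuousP (fun v : G => v * g^-1))) oV.
    have h := @cont_mul G G (fun v => v) (fun _ => g^-1) (@cont_id G) (@cont_cst G G g^-1).
    exact: h.
  have Ag : ((fun c => c * g^-1) @^-1` V) g by rewrite /= mulgV.
  have [n [y [Uy [Uny Ac]]]] := E U _ oU Ux oA Ag.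
  exists n, y; split => //; split => //.
  exists (cocycle T Ti f n y * g^-1), g; split => //; split => //.
  by rewrite mulgVK.
Qed.

Lemma ess_mulH (X : topologicalType) (G : topGroupType) (T Ti : X -> X)
  (f : X -> G) (H : X -> set G) :
  cancel T Ti -> cancel Ti T -> continuous T -> continuous Ti -> continuous f ->
  fell_continuous H -> (forall x, H x `<=` ess_range T Ti f x) ->
  forall x g h, ess_range T Ti f x g -> H x h -> ess_range T Ti f x (g * h).
Proof.
move=> TK TiK cT cTi cf FH HE x g h Eg Hh.
apply/essP => U A0 oU Ux oA0 A0gh.
have : nbhs (g, h) ((fun p : G * G => p.1 * p.2) @^-1` A0).
  by apply: topgroup_mul_continuous; apply: open_nbhs_nbhs; split.
move=> /nbhs_prod_open [A1 [B1 [oA1 A1g oB1 B1h AB]]].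
pose L := [set y | H y `&` set0 = set0 /\ forall i : 'I_1, H y `&` (fun _ => B1) i !=set0].
have oL : open L := FH set0 1%N (fun _ => B1) compact0 (fun _ => oB1).
have Lx : L x by split; [exact: setI0 | move=> i; exists h].
have oU' : open (U `&` L) by exact: openI.
have [n [y [[Uy Ly] [[Uny Lny] A1c]]]] :=
  (proj1 (essP T Ti f x g) Eg) _ A1 oU' (conj Ux Lx) oA1 A1g.
have [h' [Hh' B1h']] := Ly.2 ord0.
have Eh' := HE y h' Hh'.
pose W := (U `&` L) `&` (iterz T Ti n @^-1` (U `&` L)) `&` (cocycle T Ti f n @^-1` A1).
have oW : open W.
  apply: openI; first apply: openI => //.
    apply: (proj1 (continuousP (iterz T Ti n))) oU'.
    exact: iterz_cont.
  apply: (proj1 (continuousP (cocycle T Ti f n))) oA1.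
  exact: cocycle_cont.
have Wy : W y by split; [split; [split|split]|].
have [m [z [[[[Uz _] _] _] [[[_ [Unmz _]] A1nmz] B1c]]]] :=
  (proj1 (essP T Ti f y h') Eh') W B1 oW Wy oB1 B1h'.
exists (n + m)%R, z; split => //; split.
  by rewrite iterz_add.
rewrite cocycle_add //.
exact: (AB _ _ A1nmz B1c).
Qed.

Theorem lemma3p1 (R : realType) (X : pseudoMetricType R) (G : topGroupType)
  (T Ti : X -> X) (f : X -> G) (H : X -> set G) (U : set G) :
  hausdorff_space X -> compact [set: X] ->
  minimal_homeo T Ti ->
  hausdorff_space G -> locally_compact [set: G] -> @second_countable G ->
  continuous f ->
  consistent_selection T Ti f H ->
  open U -> compact (closure U) ->
  open [set x | ess_range T Ti f x `&`
                  (setmulg (closure U) (H x) `\` setmulg U (H x)) = set0].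
Proof.
move=> _ _ [[TK TiK cT cTi] _] _ _ _ cf [Hsub FH HE _] oU cU.
rewrite openE => x Mx.
pose P := fun (x' : X) (a : G) =>
  ~ (ess_range T Ti f x' a /\ ~ setmulg U (H x') a).
have cov : \forall x' \near x, closure U `<=` P x'.
  apply: (proj1 (compact_near_coveringP _) cU) => u Uu.
  case: (pselect (ess_range T Ti f x u)) => [Eu|nEu].
  - have : setmulg U (H x) u.
      apply: contrapT => nUH.
      have [_ H1 _ _] := Hsub x.
      have : (ess_range T Ti f x `&`
        (setmulg (closure U) (H x) `\` setmulg U (H x))) u.
        split => //; split => //; exists u, 1; split => //; split => //.
        by rewrite mulg1.
      by rewrite Mx.
    move=> [w [h [Uw [Hh uwh]]]].
    have : nbhs (u, h) ((fun p : G * G => p.1 * p.2^-1) @^-1` U).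
      have c := @cont_mul (G * G)%type G (fun p => p.1) (fun p => p.2^-1)
        (@cont_fst G G) (cont_inv (@cont_snd G G)).
      apply: c; apply: open_nbhs_nbhs; split => //=.
      by rewrite uwh mulgK.
    move=> /nbhs_prod_open [A [B [oA Au oB Bh sub]]].
    pose L := [set y | H y `&` set0 = set0 /\
                forall i : 'I_1, H y `&` (fun _ => B) i !=set0].
    have oL : open L := FH set0 1%N (fun _ => B) compact0 (fun _ => oB).
    have Lx : L x by split; [exact: setI0 | move=> i; exists h].
    exists (A, L); first by split; apply: open_nbhs_nbhs.
    move=> [a x'] /= [Aa Lx'] [_]; apply.
    have [h' [Hh' Bh']] := Lx'.2 ord0.
    exists (a * h'^-1), h'; split; first exact: (sub _ _ Aa Bh').
    by split => //; rewrite mulgVK.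
  - have [U0 [A [oU0 U0x oA Au nE]]] : exists U0 A, [/\ open U0, U0 x, open A, A u &
        forall n y, U0 y -> U0 (iterz T Ti n y) -> ~ A (cocycle T Ti f n y)].
      apply: contrapT => nex; apply: nEu; apply/essP => U0 A oU0 U0x oA Au.
      apply: contrapT => nex2; apply: nex; exists U0, A; split => // n y U0y U0ny Ac.
      by apply: nex2; exists n, y.
    exists (A, U0); first by split; apply: open_nbhs_nbhs.
    move=> [a x'] /= [Aa U0x'] [Ea _].
    have [n [y [U0y [U0ny Ac]]]] := (proj1 (essP T Ti f x' a) Ea) U0 A oU0 U0x' oA Aa.
    exact: (nE n y U0y U0ny Ac).
rewrite /interior; apply: filterS cov => x' sub /=.
apply/seteqP; split => // g [Eg [[a [h [Ua [Hh ge]]]] nUH]].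
have [_ _ Hmul Hinv] := Hsub x'.
have Ea : ess_range T Ti f x' a.
  have := ess_mulH TK TiK cT cTi cf FH HE Eg (Hinv h Hh).
  by rewrite ge -mulgA mulgV mulg1.
apply: (sub a Ua); split => // -[w [h2 [Uw [Hh2 ae]]]].
apply: nUH; exists w, (h2 * h); split => //; split; first exact: Hmul.
by rewrite ge ae mulgA.
Qed.
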